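(* Let $m\ge 1$, $N=2^m$, let $\mathcal{A}\subseteq[0,N-1]$ with complement $\mathcal{A}^c=[0,N-1]\setminus\mathcal{A}$, and let $\mathbf{P}\in\mathbb{F}_2^{N\times N}$ be upper triangular with all diagonal entries equal to $1$. Then $$\mathcal{C}_{\mathbf{P}\boldsymbol{G}_N}(\mathcal{A})^{\perp}=\mathcal{C}_{(\mathbf{P}^{t})^{-1}\boldsymbol{G}_N\mathbf{Q}_{\pi}\boldsymbol{G}_N}(\mathcal{A}^c).$$
   Context: $[\ell,u]=\{\ell,\ell+1,\dots,u\}$. $\boldsymbol{G}_N=\begin{pmatrix}1&0\\1&1\end{pmatrix}^{\otimes m}$ over $\mathbb{F}_2$, rows and columns indexed by $0,\dots,N-1$. For a matrix $\mathbf{B}\in\mathbb{F}_2^{N\times N}$ and a set $\mathcal{S}\subseteq[0,N-1]$, $\mathcal{C}_{\mathbf{B}}(\mathcal{S})$ denotes the binary linear code spanned by the rows of $\mathbf{B}$ with indices in $\mathcal{S}$. The code $\mathcal{C}_{\mathbf{P}\boldsymbol{G}_N}(\mathcal{A})$ with $\mathbf{P}$ upper triangular with unit diagonal is called an upper polynomial polar code. $\mathbf{Q}_{\pi}$ is the $N\times N$ permutation matrix of the permutation $\pi$ of $[0,N-1]$ swapping $i$ and $N-1-i$ for every $i$. $\perp$ denotes the dual code with respect to the standard inner product $\boldsymbol{v}\cdot\boldsymbol{w}=\sum_i v_iw_i$ over $\mathbb{F}_2$; $\mathbf{P}^t$ is the transpose. *)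

(* Defs.v *)
From mathcomp Require Import all_boot all_algebra.
From mathcomp Require Import fingroup perm.
Set Implicit Arguments. Unset Strict Implicit. Unset Printing Implicit Defensive.
Import GRing.Theory.
Local Open Scope ring_scope.

(* Base kernel F = [[1,0],[1,1]] over F_2, indexed by nat in {0,1}. *)
Definition kerF (a b : nat) : 'F_2 := if (b <= a)%N then 1 else 0.

(* Entries of the m-fold Kronecker power F^{(x)m}, first factor outermost:
   (A (x) B)(i,j) = A(i / n, j / n) * B(i mod n, j mod n). *)
Fixpoint Gentry (m : nat) (i j : nat) : 'F_2 :=
  match m with
  | 0 => 1
  | k.+1 => kerF (i %/ 2 ^ k) (j %/ 2 ^ k) * Gentry k (i %% 2 ^ k) (j %% 2 ^ k)
  end.

Definition GN (m : nat) : 'M['F_2]_(2 ^ m) := \matrix_(i, j) Gentry m i j.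

Definition Qpi (n : nat) : 'M['F_2]_n := perm_mx (perm (@rev_ord_inj n)).

Definition code n (B : 'M['F_2]_n) (S : {set 'I_n}) : {set 'rV['F_2]_n} :=
  [set v : 'rV['F_2]_n | (v <= \sum_(i in S) <<row i B>>)%MS].

Definition dual n (C : {set 'rV['F_2]_n}) : {set 'rV['F_2]_n} :=
  [set w : 'rV['F_2]_n | [forall v in C, \sum_i v 0 i * w 0 i == 0]].

Definition upper_unitri n (P : 'M['F_2]_n) : Prop :=
  (forall i j : 'I_n, (j < i)%N -> P i j = 0) /\ (forall i : 'I_n, P i i = 1).

(* Main.v *)
Require Import Defs.
From mathcomp Require Import all_boot all_algebra.
From mathcomp Require Import fingroup perm ring zify.
Set Implicit Arguments. Unset Strict Implicit. Unset Printing Implicit Defensive.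
Import GRing.Theory.
Local Open Scope ring_scope.

Lemma GentryS m i j : Gentry m.+1 i j =
  kerF (i %/ 2 ^ m) (j %/ 2 ^ m) * Gentry m (i %% 2 ^ m) (j %% 2 ^ m).
Proof. by []. Qed.

Lemma sum_split2 (n : nat) (F : nat -> 'F_2) :
  \sum_(k < 2 * n) F k = \sum_(k < n) F k + \sum_(k < n) F (n + k)%N.
Proof. by rewrite mul2n -addnn big_split_ord. Qed.

Lemma decomp m i : (i < 2 ^ m.+1)%N ->
  exists a b, [/\ (a < 2)%N, (b < 2 ^ m)%N & i = a * 2 ^ m + b]%N.
Proof.
move=> hi; exists (i %/ 2 ^ m)%N, (i %% 2 ^ m)%N; split.
- by rewrite ltn_divLR ?expn_gt0 // -expnS.
- by rewrite ltn_pmod ?expn_gt0.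
- exact: divn_eq.
Qed.

Lemma divdec m a b : (b < 2 ^ m)%N -> ((a * 2 ^ m + b) %/ 2 ^ m = a)%N.
Proof. by move=> hb; rewrite divnMDl ?expn_gt0 // divn_small // addn0. Qed.
Lemma moddec m a b : (b < 2 ^ m)%N -> ((a * 2 ^ m + b) %% 2 ^ m = b)%N.
Proof. by move=> hb; rewrite modnMDl modn_small. Qed.

Lemma split_sumG m (f : nat -> nat -> 'F_2) :
  \sum_(k < 2 ^ m.+1) f (k %/ 2 ^ m)%N (k %% 2 ^ m)%N =
  \sum_(k < 2 ^ m) f 0%N k + \sum_(k < 2 ^ m) f 1%N k.
Proof.
rewrite expnS (sum_split2 _ (fun k => f (k %/ 2 ^ m)%N (k %% 2 ^ m)%N)); congr (_ + _); apply: eq_bigr => k _.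
  by have := divdec 0 (ltn_ord k); have := moddec 0 (ltn_ord k); rewrite mul0n add0n => -> ->.
by have := divdec 1 (ltn_ord k); have := moddec 1 (ltn_ord k); rewrite mul1n => -> ->.
Qed.

Lemma L1 m i j : (i < 2 ^ m)%N -> (j < 2 ^ m)%N ->
  \sum_(k < 2 ^ m) Gentry m i k * Gentry m k j = ((i == j)%:R : 'F_2).
Proof.
elim: m i j => [|m IH] i j hi hj.
  rewrite big_ord1 /=; move: hi hj; rewrite expn0 !ltnS !leqn0 => /eqP-> /eqP->.
  by rewrite mulr1.
have [a [b [ha hb ->]]] := decomp hi.
have [c [d [hc hd ->]]] := decomp hj.
under eq_bigr do rewrite !GentryS !divdec // !moddec //.

rewrite (split_sumG m (fun x y => kerF a x * Gentry m b y * (kerF x c * Gentry m y d))).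
have E : forall x, \sum_(k < 2 ^ m) kerF a x * Gentry m b k * (kerF x c * Gentry m k d)
   = kerF a x * kerF x c * \sum_(k < 2 ^ m) Gentry m b k * Gentry m k d.
  by move=> x; rewrite mulr_sumr; apply: eq_bigr => k _; ring.
rewrite !E IH //.
have -> : (a * 2 ^ m + b == c * 2 ^ m + d)%N = (a == c) && (b == d).
  apply/eqP/andP => [h|[/eqP-> /eqP->] //].
  by rewrite -(divdec a hb) h divdec // -(moddec a hb) h moddec.
clear E; case: a ha => [|[|//]] _; case: c hc => [|[|//]] _; case: (b == d);
  by apply/eqP.
Qed.

Lemma L3 m i j : (i < 2 ^ m)%N -> (j < 2 ^ m)%N ->
  \sum_(k < 2 ^ m) Gentry m k i * Gentry m k j = Gentry m i (2 ^ m - 1 - j)%N.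
Proof.
elim: m i j => [|m IH] i j hi hj.
  rewrite big_ord1 /=; by rewrite mulr1.
have [a [b [ha hb ->]]] := decomp hi.
have [c [d [hc hd ->]]] := decomp hj.
under eq_bigr do rewrite !GentryS !divdec // !moddec //.
rewrite (split_sumG m (fun x y => kerF x a * Gentry m y b * (kerF x c * Gentry m y d))).
have E : forall x, \sum_(k < 2 ^ m) kerF x a * Gentry m k b * (kerF x c * Gentry m k d)
   = kerF x a * kerF x c * \sum_(k < 2 ^ m) Gentry m k b * Gentry m k d.
  by move=> x; rewrite mulr_sumr; apply: eq_bigr => k _; ring.
rewrite !E IH // GentryS divdec // moddec //.
have hd' : (2 ^ m - 1 - d < 2 ^ m)%N.
  have := expn_gt0 2 m; lia.
clear E; case: a ha => [|[|//]] _; case: c hc => [|[|//]] _.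
- have -> : (2 ^ m.+1 - 1 - (0 * 2 ^ m + d) = 1 * 2 ^ m + (2 ^ m - 1 - d))%N.
    rewrite expnS; have := expn_gt0 2 m; lia.
  rewrite divdec // moddec //. by rewrite -mulrDl; congr (_ * _); apply/eqP.
- have -> : (2 ^ m.+1 - 1 - (1 * 2 ^ m + d) = 0 * 2 ^ m + (2 ^ m - 1 - d))%N.
    rewrite expnS; have := expn_gt0 2 m; lia.
  by rewrite divdec // moddec // -mulrDl; congr (_ * _); apply/eqP.
- have -> : (2 ^ m.+1 - 1 - (0 * 2 ^ m + d) = 1 * 2 ^ m + (2 ^ m - 1 - d))%N.
    rewrite expnS; have := expn_gt0 2 m; lia.
  by rewrite divdec // moddec // -mulrDl; congr (_ * _); apply/eqP.
- have -> : (2 ^ m.+1 - 1 - (1 * 2 ^ m + d) = 0 * 2 ^ m + (2 ^ m - 1 - d))%N.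
    rewrite expnS; have := expn_gt0 2 m; lia.
  by rewrite divdec // moddec // -mulrDl; congr (_ * _); apply/eqP.
Qed.

Lemma GG m : GN m *m GN m = 1%:M.
Proof.
apply/matrixP => i j; rewrite !mxE; under eq_bigr do rewrite !mxE.
by rewrite L1.
Qed.

Lemma GtG m : (GN m)^T *m GN m = GN m *m Qpi (2 ^ m).
Proof.
apply/matrixP => i j; rewrite !mxE; under eq_bigr do rewrite !mxE.
rewrite L3 //.
under [RHS]eq_bigr do rewrite /Qpi /perm_mx !mxE permE.
rewrite (bigD1 (rev_ord j)) //= rev_ordK eqxx mulr1 big1 ?addr0.
  congr Gentry; rewrite /=; lia.
move=> k hk; case: eqP => [e|]; last by rewrite mulr0.
by rewrite -e rev_ordK eqxx in hk.
Qed.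

Lemma KEY m : GN m *m (GN m)^T *m (Qpi (2 ^ m))^T *m (GN m)^T = 1%:M.
Proof.
have h := congr1 trmx (GtG m); rewrite !trmx_mul trmxK in h.
rewrite -!mulmxA -h !mulmxA.
by rewrite -(mulmxA (GN m)) -trmx_mul GG trmx1 mulmx1 GG.
Qed.

Definition BS n (B : 'M['F_2]_n) (S : {set 'I_n}) : 'M['F_2]_n :=
  \matrix_(i, j) if i \in S then B i j else 0.

Lemma codeP n (B : 'M['F_2]_n) (S : {set 'I_n}) (v : 'rV_n) :
  v \in code B S <-> exists c : 'rV_n, (forall i, i \notin S -> c 0 i = 0) /\ v = c *m B.
Proof.
have rBS : forall i, i \in S -> row i (BS B S) = row i B.
  by move=> i hi; apply/rowP => j; rewrite !mxE hi.
have rBS0 : forall i, i \notin S -> row i (BS B S) = 0.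
  by move=> i hi; apply/rowP => j; rewrite !mxE (negbTE hi).
have E : (v <= \sum_(i in S) <<row i B>>)%MS = (v <= BS B S)%MS.
  apply/idP/idP => h; apply: (submx_trans h).
    by apply/sumsmx_subP => i hi; rewrite genmxE -rBS // row_sub.
  apply/row_subP => i; case hi: (i \in S).
    by rewrite rBS //; apply: (sumsmx_sup i) => //; rewrite genmxE.
  by rewrite rBS0 ?hi // sub0mx.
rewrite inE E; split.
  case/submxP => D ->.
  exists (\row_i (if i \in S then D 0 i else 0)); split.
    by move=> i hi; rewrite mxE (negbTE hi).
  apply/rowP => j; rewrite !mxE; apply: eq_bigr => k _; rewrite !mxE.
  by case: (k \in S); rewrite ?mulr0 ?mul0r.
case=> c [hc ->].
have -> : c *m B = c *m BS B S.
  apply/rowP => j; rewrite !mxE; apply: eq_bigr => k _; rewrite !mxE.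
  by case hk: (k \in S) => //=; rewrite hc ?hk // mul0r mulr0.
exact: submxMl.
Qed.

Lemma dotE n (v w : 'rV['F_2]_n) : \sum_i v 0 i * w 0 i = (v *m w^T) 0 0.
Proof. by rewrite !mxE; apply: eq_bigr => i _; rewrite mxE. Qed.

Theorem theorem1 (m : nat) (A : {set 'I_(2 ^ m)}) (P : 'M['F_2]_(2 ^ m)) :
  (1 <= m)%N -> upper_unitri P ->
  dual (code (P *m GN m) A) =
  code (invmx P^T *m GN m *m Qpi (2 ^ m) *m GN m) (~: A).
Proof.
move=> _ [hP1 hP2].
set G := GN m; set Q := Qpi (2 ^ m); set B := P *m G.
set M := invmx P^T *m G *m Q *m G.
have Pu : P \in unitmx.
  rewrite unitmxE -det_tr det_trig.
    by rewrite big1 ?unitr1 // => i _; rewrite mxE hP2.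
  by apply/is_trig_mxP => i j hij; rewrite mxE hP1.
have BMt : B *m M^T = 1%:M.
  rewrite /M !trmx_mul trmx_inv trmxK /B.
  have -> : P *m G *m (G^T *m (Q^T *m (G^T *m invmx P)))
     = P *m (G *m G^T *m Q^T *m G^T) *m invmx P by rewrite !mulmxA.
  by rewrite KEY mulmx1 mulmxV.
have BtM : B^T *m M = 1%:M.
  apply: mulmx1C; by rewrite -[M]trmxK -trmx_mul BMt trmx1.
apply/setP => w; apply/idP/idP => hw.
  apply/codeP; exists (w *m B^T); split.
    move=> i; rewrite inE negbK => hi.
    have hr : row i B \in code B A.
      by apply/codeP; exists 'e_i; split; [move=> k hk; rewrite mxE eqxx /=; case: eqP => // e; by rewrite e hi in hk | exact: rowE].
    move: hw; rewrite inE => /forall_inP /(_ _ hr) /eqP.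
    rewrite !mxE => h; apply: (etrans _ h); apply: eq_bigr => k _; rewrite !mxE mulrC.
    by [].
  by rewrite -mulmxA BtM mulmx1.
case/codeP: hw => c [hc ->].
rewrite inE; apply/forall_inP => v /codeP [d [hd ->]].
rewrite dotE trmx_mul mulmxA -(mulmxA d) BMt mulmx1 !mxE.
apply/eqP; apply: big1 => i _; rewrite mxE.
case hi: (i \in A).
  by rewrite hc ?mulr0 // inE hi.
by rewrite hd ?mul0r ?hi.
Qed.
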